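(* Let $A$ be a lattice with finite generating set $X$, let $D$ be a lattice with finite generating set $P$ satisfying Dean's condition (D), and let $g\colon A\to D$ be an epimorphism. Assume every $p\in P$ has a least preimage $\beta(p):=\bigwedge g^{-1}(p)$ in $A$ and that $\beta(p)\in H_{X,0}$. Let $k\in\mathbb N$. Then: (1) $\beta_{g,k}(\bigwedge E)=\bigwedge\{\beta_{g,k}(e): e\in E\}\wedge\beta_{g,0}(\bigwedge E)$ for every finite $E\subseteq D$; (2) for every $d\in H_{P,k}$ (computed in $D$ with respect to $P$), the preimage $g^{-1}(d)$ has a least element and it equals $\beta_{g,k}(d)$.
   Context: For a lattice $A$ with finite generating set $X$ and $W\subseteq A$, let $W^\wedge:=\{\bigwedge U: U\subseteq W\text{ finite}\}$ and $W^\vee:=\{\bigvee U: U\subseteq W\text{ finite}\}$, with the conventions $\bigwedge\emptyset:=\bigvee X$ and $\bigvee\emptyset:=\bigwedge X$. Define $G_{X,0}:=X$, $H_{X,k}:=G_{X,k}^\wedge$, $G_{X,k+1}:=H_{X,k}^\vee$ for $k\in\mathbb N$ (and likewise $G_{P,k},H_{P,k}$ in $D$ with respect to $P$). For an epimorphism $g\colon A\to D$: $\beta_{g,k}(d):=\bigwedge\{w\in H_{X,k}: g(w)\ge d\}$. Dean's condition (D) for $D$ with finite generating set $P$: for all finite $S,T\subseteq D$ with $\bigwedge S\le\bigvee T$, either some $s\in S$ has $s\le\bigvee T$, or some $t\in T$ has $\bigwedge S\le t$, or some $p\in P$ has $\bigwedge S\le p\le\bigvee T$. *)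

(* Defs.v *)
From HB Require Import structures.
From mathcomp Require Import all_boot all_order.
Set Implicit Arguments. Unset Strict Implicit. Unset Printing Implicit Defensive.
Import Order.TTheory.
Local Open Scope order_scope.

(* A finite generating set is represented as a nonempty list x0 :: X
   (a generating set of a lattice is necessarily nonempty).
   Finite subsets U of a finite set W are represented by the subsequences of
   a list enumerating W (meets/joins are idempotent, so repetitions are
   harmless). *)

Section LatDefs.
Context {d : Order.disp_t} {A : latticeType d}.

Fixpoint subseqs (s : seq A) : seq (seq A) :=
  if s is x :: s' then subseqs s' ++ map (cons x) (subseqs s') else [:: [::]].

Definition bigJ (x0 : A) (X : seq A) : A := foldr Order.join x0 X.
Definition bigM (x0 : A) (X : seq A) : A := foldr Order.meet x0 X.

Definition meetU (x0 : A) (X : seq A) (U : seq A) : A :=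
  if U is u :: U' then foldr Order.meet u U' else bigJ x0 X.
Definition joinU (x0 : A) (X : seq A) (U : seq A) : A :=
  if U is u :: U' then foldr Order.join u U' else bigM x0 X.

Definition meetcl (x0 : A) (X : seq A) (W : seq A) : seq A :=
  map (meetU x0 X) (subseqs W).
Definition joincl (x0 : A) (X : seq A) (W : seq A) : seq A :=
  map (joinU x0 X) (subseqs W).

Fixpoint Gs (x0 : A) (X : seq A) (k : nat) : seq A :=
  if k is k'.+1 then joincl x0 X (meetcl x0 X (Gs x0 X k')) else x0 :: X.
Definition Hs (x0 : A) (X : seq A) (k : nat) : seq A := meetcl x0 X (Gs x0 X k).

Definition generates (x0 : A) (X : seq A) : Prop :=
  forall S : A -> Prop,
    (forall x, x \in x0 :: X -> S x) ->
    (forall a b, S a -> S b -> S (a `&` b)) ->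
    (forall a b, S a -> S b -> S (a `|` b)) ->
    forall a, S a.

Definition deanD (p0 : A) (P : seq A) : Prop :=
  forall S T : seq A, meetU p0 P S <= joinU p0 P T ->
    (exists2 s, s \in S & s <= joinU p0 P T) \/
    (exists2 t, t \in T & meetU p0 P S <= t) \/
    (exists2 p, p \in p0 :: P & meetU p0 P S <= p <= joinU p0 P T).

End LatDefs.

Section Beta.
Context {dA dD : Order.disp_t} {A : latticeType dA} {D : latticeType dD}.

Definition beta (x0 : A) (X : seq A) (g : A -> D) (k : nat) (d : D) : A :=
  meetU x0 X [seq w <- Hs x0 X k | d <= g w].

End Beta.

(* Main.v *)
Require Import Defs.
From HB Require Import structures.
From mathcomp Require Import all_boot all_order.
Import Order.TTheory.
Set Implicit Arguments. Unset Strict Implicit. Unset Printing Implicit Defensive.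
Local Open Scope order_scope.

Section Gen.
Context {d : Order.disp_t} {L : latticeType d}.

Lemma le_foldrI (z u : L) U :
  (z <= foldr Order.meet u U) = (z <= u) && all (fun s => z <= s) U.
Proof. elim: U => [|v U IH] /=; first by rewrite andbT. by rewrite lexI IH andbCA. Qed.

Lemma le_foldrU (z u : L) U :
  (foldr Order.join u U <= z) = (u <= z) && all (fun s => s <= z) U.
Proof. elim: U => [|v U IH] /=; first by rewrite andbT. by rewrite leUx IH andbCA. Qed.

Lemma gen_top (x0 : L) X : generates x0 X -> forall a, a <= bigJ x0 X.
Proof.
move=> hg; apply: (hg (fun a => a <= bigJ x0 X)).
- move=> x hx; have := lexx (bigJ x0 X); rewrite {1}/bigJ le_foldrU => /andP[h1 /allP h2].
  by move: hx; rewrite inE => /orP[/eqP->//|]; apply: h2.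
- by move=> a b ha hb; apply: le_trans (leIl _ _) ha.
- by move=> a b ha hb; rewrite leUx ha hb.
Qed.

Lemma gen_bot (x0 : L) X : generates x0 X -> forall a, bigM x0 X <= a.
Proof.
move=> hg; apply: (hg (fun a => bigM x0 X <= a)).
- move=> x hx; have := lexx (bigM x0 X); rewrite {2}/bigM le_foldrI => /andP[h1 /allP h2].
  by move: hx; rewrite inE => /orP[/eqP->//|]; apply: h2.
- by move=> a b ha hb; rewrite lexI ha hb.
- by move=> a b ha hb; apply: le_trans ha (leUl _ _).
Qed.

Lemma subseqs_nil (W : seq L) : [::] \in subseqs W.
Proof. elim: W => [|w W IH] /=; [by rewrite inE | by rewrite mem_cat IH]. Qed.

Lemma subseqs_single (W : seq L) w : w \in W -> [:: w] \in subseqs W.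
Proof.
elim: W => [|v W IH]; first by rewrite in_nil.
rewrite /= inE mem_cat => /orP[/eqP->|h].
  by apply/orP; right; apply/mapP; exists [::]; [exact: subseqs_nil | by []].
by rewrite IH.
Qed.

Lemma subseqs_mem (W : seq L) S x : S \in subseqs W -> x \in S -> x \in W.
Proof.
elim: W S => [|w W IH] S /=; first by rewrite inE => /eqP ->.
rewrite mem_cat => /orP[h|/mapP[S' h ->]].
  by move=> hx; rewrite inE (IH _ h hx) orbT.
rewrite inE => /orP[/eqP->|hx]; first by rewrite inE eqxx.
by rewrite inE (IH _ h hx) orbT.
Qed.

Lemma subseqs_union (W : seq L) S1 S2 : S1 \in subseqs W -> S2 \in subseqs W ->
  exists2 S3, S3 \in subseqs W & forall x, (x \in S3) = (x \in S1) || (x \in S2).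
Proof.
elim: W S1 S2 => [|w W IH] S1 S2 /=.
  rewrite !inE => /eqP-> /eqP->; exists [::]; first by rewrite inE.
  by move=> x; rewrite !in_nil.
rewrite !mem_cat => /orP[h1|/mapP[S1' h1 ->]] /orP[h2|/mapP[S2' h2 ->]].
- have [S3 h3 e3] := IH _ _ h1 h2; exists S3; first by rewrite mem_cat h3.
  exact: e3.
- have [S3 h3 e3] := IH _ _ h1 h2; exists (w :: S3).
    by rewrite mem_cat map_f ?orbT.
  by move=> x; rewrite !inE e3; case: (x == w); rewrite /= ?orbT.
- have [S3 h3 e3] := IH _ _ h1 h2; exists (w :: S3).
    by rewrite mem_cat map_f ?orbT.
  by move=> x; rewrite !inE e3; case: (x == w); rewrite /= ?orbT.
- have [S3 h3 e3] := IH _ _ h1 h2; exists (w :: S3).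
    by rewrite mem_cat map_f ?orbT.
  by move=> x; rewrite !inE e3; case: (x == w); rewrite /= ?orbT.
Qed.

Context (x0 : L) (X : seq L).

Section Top.
Context (htop : forall a : L, a <= bigJ x0 X).

Lemma le_meetU z S : (z <= meetU x0 X S) <-> (forall s, s \in S -> z <= s).
Proof.
case: S => [|u U] /=.
  by split=> [_ s|_]; [rewrite in_nil | exact: htop].
rewrite le_foldrI; split.
  move/andP=> [h1 /allP h2] s; rewrite inE => /orP[/eqP->//|]; exact: h2.
move=> h; apply/andP; split; first by apply: h; rewrite inE eqxx.
by apply/allP => s hs; apply: h; rewrite inE hs orbT.
Qed.

Lemma meetU_le s S : s \in S -> meetU x0 X S <= s.
Proof. by move=> hs; have /le_meetU H := lexx (meetU x0 X S); apply: H. Qed.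

Lemma meetU_cons s S : meetU x0 X (s :: S) = s `&` meetU x0 X S.
Proof.
apply: le_anti; apply/andP; split.
- rewrite lexI; apply/andP; split; first by apply: meetU_le; rewrite inE eqxx.
  by apply/le_meetU => t ht; apply: meetU_le; rewrite inE ht orbT.
- apply/le_meetU => t; rewrite inE => /orP[/eqP->|ht]; first exact: leIl.
  by apply: le_trans (leIr _ _) _; apply: meetU_le.
Qed.

Lemma meetcl_top W : bigJ x0 X \in meetcl x0 X W.
Proof. by apply/mapP; exists [::]; [exact: subseqs_nil | by []]. Qed.

Lemma meetcl_gen W w : w \in W -> w \in meetcl x0 X W.
Proof. by move=> h; apply/mapP; exists [:: w]; [exact: subseqs_single | by []]. Qed.

Lemma meetcl_meet W a b : a \in meetcl x0 X W -> b \in meetcl x0 X W ->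
  a `&` b \in meetcl x0 X W.
Proof.
case/mapP=> S1 h1 ->; case/mapP=> S2 h2 ->.
have [S3 h3 e3] := subseqs_union h1 h2.
apply/mapP; exists S3 => //; apply: le_anti; apply/andP; split.
- apply/le_meetU => s; rewrite e3 => /orP[hs|hs].
    by apply: le_trans (leIl _ _) _; apply: meetU_le.
  by apply: le_trans (leIr _ _) _; apply: meetU_le.
- by rewrite lexI; apply/andP; split; apply/le_meetU => s hs; apply: meetU_le;
    rewrite e3 hs ?orbT.
Qed.

Lemma meetcl_closed W S : (forall s, s \in S -> s \in meetcl x0 X W) ->
  meetU x0 X S \in meetcl x0 X W.
Proof.
elim: S => [|s S IH] h; first exact: meetcl_top.
rewrite meetU_cons; apply: meetcl_meet; first by apply: h; rewrite inE eqxx.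
by apply: IH => t ht; apply: h; rewrite inE ht orbT.
Qed.

End Top.

Section Bot.
Context (hbot : forall a : L, bigM x0 X <= a).

Lemma joinU_le z S : (joinU x0 X S <= z) <-> (forall s, s \in S -> s <= z).
Proof.
case: S => [|u U] /=.
  by split=> [_ s|_]; [rewrite in_nil | exact: hbot].
rewrite le_foldrU; split.
  move/andP=> [h1 /allP h2] s; rewrite inE => /orP[/eqP->//|]; exact: h2.
move=> h; apply/andP; split; first by apply: h; rewrite inE eqxx.
by apply/allP => s hs; apply: h; rewrite inE hs orbT.
Qed.

Lemma le_joinU s S : s \in S -> s <= joinU x0 X S.
Proof. by move=> hs; have /joinU_le H := lexx (joinU x0 X S); apply: H. Qed.

Lemma joinU_cons s S : joinU x0 X (s :: S) = s `|` joinU x0 X S.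
Proof.
apply: le_anti; apply/andP; split.
- apply/joinU_le => t; rewrite inE => /orP[/eqP->|ht]; first exact: leUl.
  by apply: le_trans (leUr _ _); apply: le_joinU.
- rewrite leUx; apply/andP; split; first by apply: le_joinU; rewrite inE eqxx.
  by apply/joinU_le => t ht; apply: le_joinU; rewrite inE ht orbT.
Qed.

Lemma joincl_bot W : bigM x0 X \in joincl x0 X W.
Proof. by apply/mapP; exists [::]; [exact: subseqs_nil | by []]. Qed.

Lemma joincl_gen W w : w \in W -> w \in joincl x0 X W.
Proof. by move=> h; apply/mapP; exists [:: w]; [exact: subseqs_single | by []]. Qed.

Lemma joincl_join W a b : a \in joincl x0 X W -> b \in joincl x0 X W ->
  a `|` b \in joincl x0 X W.
Proof.
case/mapP=> S1 h1 ->; case/mapP=> S2 h2 ->.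
have [S3 h3 e3] := subseqs_union h1 h2.
apply/mapP; exists S3 => //; apply: le_anti; apply/andP; split.
- by rewrite leUx; apply/andP; split; apply/joinU_le => s hs; apply: le_joinU;
    rewrite e3 hs ?orbT.
- apply/joinU_le => s; rewrite e3 => /orP[hs|hs].
    by apply: le_trans (leUl _ _); apply: le_joinU.
  by apply: le_trans (leUr _ _); apply: le_joinU.
Qed.

Lemma joincl_closed W S : (forall s, s \in S -> s \in joincl x0 X W) ->
  joinU x0 X S \in joincl x0 X W.
Proof.
elim: S => [|s S IH] h; first exact: joincl_bot.
rewrite joinU_cons; apply: joincl_join; first by apply: h; rewrite inE eqxx.
by apply: IH => t ht; apply: h; rewrite inE ht orbT.
Qed.

End Bot.

Section Mono.
Context (htop : forall a : L, a <= bigJ x0 X) (hbot : forall a : L, bigM x0 X <= a).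

Lemma meetcl_mono W W' : {subset W <= W'} -> {subset meetcl x0 X W <= meetcl x0 X W'}.
Proof.
move=> hW z /mapP[S hS ->]; apply: meetcl_closed => // s hs.
by apply: meetcl_gen => //; apply: hW; apply: subseqs_mem hS hs.
Qed.

Lemma Gs_sub k : {subset Gs x0 X k <= Hs x0 X k}.
Proof. by move=> z hz; apply: meetcl_gen. Qed.

Lemma Gs_mono k : {subset Gs x0 X k <= Gs x0 X k.+1}.
Proof. by move=> z hz; apply: joincl_gen; apply: Gs_sub. Qed.

Lemma Hs_mono j k : j <= k -> {subset Hs x0 X j <= Hs x0 X k}.
Proof.
move=> /subnK <-; elim: (k - j) => [|n IH] //= z hz.
by apply: meetcl_mono (IH _ hz); apply: Gs_mono.
Qed.

End Mono.
End Gen.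

Section Main.
Context {dA dD : Order.disp_t} {A : latticeType dA} {D : latticeType dD}
  (x0 : A) (X : seq A) (p0 : D) (P : seq D) (g : A -> D)
  (hgA : generates x0 X) (hgD : generates p0 P) (hdean : deanD p0 P)
  (gI : forall a b : A, g (a `&` b) = g a `&` g b)
  (gU : forall a b : A, g (a `|` b) = g a `|` g b)
  (gsurj : forall e : D, exists a : A, g a = e)
  (hP : forall p, p \in p0 :: P ->
     exists b : A, [/\ g b = p, (forall a, g a = p -> b <= a) & b \in Hs x0 X 0]).

Let topA := gen_top hgA.
Let botA := gen_bot hgA.
Let topD := gen_top hgD.
Let botD := gen_bot hgD.

Lemma gmono a b : a <= b -> g a <= g b.
Proof. by move=> /meet_idPl e; rewrite -e gI leIr. Qed.

Lemma g_top e : e <= g (bigJ x0 X).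
Proof. by case: (gsurj e) => a <-; apply: gmono; apply: topA. Qed.

Lemma g_joinU u U : g (joinU x0 X (u :: U)) = joinU p0 P (map g (u :: U)).
Proof. by rewrite /=; elim: U => //= v U IH; rewrite gU IH. Qed.

Lemma le_g_meetU e S : (forall s, s \in S -> e <= g s) -> e <= g (meetU x0 X S).
Proof.
case: S => [|u U] h /=; first exact: g_top.
elim: U h => [|v U IH] h /=; first by apply: h; rewrite inE eqxx.
rewrite gI lexI; apply/andP; split; first by apply: h; rewrite !inE eqxx orbT.
apply: IH => s hs; apply: h; move: hs; rewrite !inE => /orP[->|->]; by rewrite ?orbT.
Qed.

Lemma beta_lb k e w : w \in Hs x0 X k -> e <= g w -> beta x0 X g k e <= w.
Proof. by move=> hw he; apply: (meetU_le topA); rewrite mem_filter he hw. Qed.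

Lemma beta_ge k e : e <= g (beta x0 X g k e).
Proof. by apply: le_g_meetU => w; rewrite mem_filter => /andP[]. Qed.

Lemma beta_glb k e z : (forall w, w \in Hs x0 X k -> e <= g w -> z <= w) ->
  z <= beta x0 X g k e.
Proof.
by move=> h; apply/(le_meetU topA) => w; rewrite mem_filter => /andP[h1 h2]; apply: h.
Qed.

Lemma beta_mono k e e' : e <= e' -> beta x0 X g k e <= beta x0 X g k e'.
Proof. by move=> h; apply: beta_glb => w hw hw'; apply: beta_lb hw (le_trans h hw'). Qed.

Lemma beta_in k e : beta x0 X g k e \in Hs x0 X k.
Proof.
by apply: (meetcl_closed topA) => w; rewrite mem_filter => /andP[_].
Qed.

Lemma Hmono j k : j <= k -> {subset Hs x0 X j <= Hs x0 X k}.
Proof. exact: (Hs_mono topA). Qed.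

Lemma bot_in k : bigM x0 X \in Hs x0 X k.
Proof.
apply: (Hmono (leq0n k)); change (bigM x0 X) with (meetU x0 X (x0 :: X)).
by apply: (meetcl_closed topA) => s hs; apply: meetcl_gen.
Qed.

Lemma Pleast p a : p \in p0 :: P -> p <= g a ->
  exists b, [/\ g b = p, b <= a & b \in Hs x0 X 0].
Proof.
move=> hp hpa; have [b [gb hb bH]] := hP hp; exists b; split => //.
have: b <= a `&` b by apply: hb; rewrite gI gb; apply/meet_idPr.
by move/le_trans; apply; apply: leIl.
Qed.

Lemma Pcase k p a : p \in p0 :: P -> p <= g a -> beta x0 X g k p <= a.
Proof.
move=> hp hpa; have [b [gb hb bH]] := Pleast hp hpa.
apply: le_trans hb; apply: beta_lb; first exact: (Hmono (leq0n k)).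
by rewrite gb.
Qed.

Lemma Qstep k :
  (forall a s, s \in Gs p0 P k -> s <= g a -> beta x0 X g k s <= a) ->
  forall a e, e \in Hs p0 P k -> e <= g a -> beta x0 X g k e <= a.
Proof.
move=> Gk.
apply: (@hgA (fun a => forall e, e \in Hs p0 P k -> e <= g a -> beta x0 X g k e <= a)).
- move=> x hx e he hex; apply: beta_lb hex.
  by apply: (Hmono (leq0n k)); apply: Gs_sub.
- move=> a1 b1 ha hb e he; rewrite gI lexI => /andP[h1 h2].
  by rewrite lexI (ha _ he h1) (hb _ he h2).
- move=> a1 b1 ha hb e he hab; have /mapP[S hS ee] := he.
  have hd : meetU p0 P S <= joinU p0 P [:: g a1; g b1] by rewrite /= -ee joinC -gU.
  case: (hdean hd) => [[s hs hsj]|[[t ht het]|[p hp /andP[h1 h2]]]].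
  + apply: le_trans (beta_mono k (_ : e <= s)) _; first by rewrite ee; apply: (meetU_le topD).
    apply: Gk; first exact: subseqs_mem hS hs.
    by move: hsj; rewrite /= joinC -gU.
  + move: ht; rewrite !inE => /orP[/eqP et|/eqP et]; rewrite -ee et in het.
      by apply: le_trans (ha _ he het) (leUl _ _).
    by apply: le_trans (hb _ he het) (leUr _ _).
  + apply: le_trans (beta_mono k (_ : e <= p)) _; first by rewrite ee.
    by apply: Pcase hp _; move: h2; rewrite /= joinC -gU.
Qed.

Lemma Q k : forall a e, e \in Hs p0 P k -> e <= g a -> beta x0 X g k e <= a.
Proof.
elim: k => [|k IH]; apply: Qstep => a s hs hsa.
  exact: Pcase hs hsa.
move: hs hsa => /mapP[[|t T] hT ->] hsa.
  by apply: le_trans (beta_lb (bot_in _) (botD _)) (botA a).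
set c := joinU x0 X (map (beta x0 X g k) (t :: T)).
have hc : c \in Hs x0 X k.+1.
  apply: Gs_sub; change (c \in joincl x0 X (Hs x0 X k)).
  apply: (joincl_closed botA) => w /mapP[u hu ->]; apply: joincl_gen; apply: beta_in.
apply: le_trans (beta_lb hc _) _.
  apply/(joinU_le botD) => u hu; apply: le_trans (beta_ge k u) _; apply: gmono.
  by apply: (le_joinU botA); apply: map_f.
apply/(joinU_le botA) => w /mapP[u hu ->]; apply: IH; first exact: subseqs_mem hT hu.
by apply: le_trans hsa; apply: (le_joinU botD).
Qed.

Lemma part2 k e : e \in Hs p0 P k ->
  g (beta x0 X g k e) = e /\ (forall a : A, g a = e -> beta x0 X g k e <= a).
Proof.
move=> he; have [a ga] := gsurj e.
have hb : beta x0 X g k e <= a by apply: Q he _; rewrite ga.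
split; last first.
  move=> a' ga'; by apply: Q he _; rewrite ga'.
apply: le_anti; apply/andP; split; last exact: beta_ge.
by apply: le_trans (gmono hb) _; rewrite ga.
Qed.

Lemma part1 k E :
  beta x0 X g k (meetU p0 P E) =
  meetU x0 X (map (beta x0 X g k) E) `&` beta x0 X g 0 (meetU p0 P E).
Proof.
set dd := meetU p0 P E.
set R := meetU x0 X (map (beta x0 X g k) E) `&` beta x0 X g 0 dd.
have R0 : forall w, w \in Hs x0 X 0 -> dd <= g w -> R <= w.
  by move=> w hw hdw; apply: le_trans (leIr _ _) _; apply: beta_lb.
have Cstep : forall j, (forall v, v \in Gs x0 X j -> dd <= g v -> R <= v) ->
    forall w, w \in Hs x0 X j -> dd <= g w -> R <= w.
  move=> j Gp w /mapP[S hS ->] hdw; apply/(le_meetU topA) => s hs.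
  apply: Gp; first exact: subseqs_mem hS hs.
  by apply: le_trans hdw _; apply: gmono; apply: (meetU_le topA).
have C : forall j, j <= k -> forall w, w \in Hs x0 X j -> dd <= g w -> R <= w.
  elim=> [|j IH] hj; apply: Cstep => v hv hdv.
    by apply: R0 => //; apply: Gs_sub.
  move: hv hdv => /mapP[[|u U] hU ->] hdv.
    by apply: R0 => //; apply: bot_in.
  have hvk : joinU x0 X (u :: U) \in Hs x0 X k.
    by apply: (Hmono hj); apply: Gs_sub; apply/mapP; exists (u :: U).
  rewrite g_joinU in hdv.
  case: (hdean hdv) => [[e he hej]|[[t ht het]|[p hp /andP[h1 h2]]]].
  + rewrite -g_joinU in hej.
    apply: le_trans (leIl _ _) _.
    apply: le_trans (meetU_le topA (map_f _ he)) _.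
    exact: beta_lb hvk hej.
  + move: ht => /mapP[u' hu' et]; rewrite et in het.
    apply: le_trans (IH (ltnW hj) _ (subseqs_mem hU hu') het) _.
    exact: (le_joinU botA).
  + rewrite -g_joinU in h2; have [b [gb hb bH]] := Pleast hp h2.
    apply: le_trans hb; apply: R0 => //; by rewrite gb.
apply: le_anti; apply/andP; split.
- rewrite lexI; apply/andP; split.
    apply/(le_meetU topA) => w /mapP[e he ->]; apply: beta_mono.
    exact: (meetU_le topD).
  apply: beta_glb => w hw hdw; apply: beta_lb hdw; exact: (Hmono (leq0n k)).
- by apply: beta_glb => w hw hdw; apply: (C k (leqnn k)).
Qed.

End Main.

Theorem mainTheorem10 (dA dD : Order.disp_t) (A : latticeType dA) (D : latticeType dD)
  (x0 : A) (X : seq A) (p0 : D) (P : seq D) (g : A -> D) :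
  generates x0 X ->
  generates p0 P ->
  deanD p0 P ->
  (forall a b : A, g (a `&` b) = g a `&` g b) ->
  (forall a b : A, g (a `|` b) = g a `|` g b) ->
  (forall e : D, exists a : A, g a = e) ->
  (forall p, p \in p0 :: P ->
     exists b : A, [/\ g b = p, (forall a, g a = p -> b <= a) & b \in Hs x0 X 0]) ->
  forall k : nat,
    (forall E : seq D,
       beta x0 X g k (meetU p0 P E) =
       meetU x0 X (map (beta x0 X g k) E) `&` beta x0 X g 0 (meetU p0 P E)) /\
    (forall e : D, e \in Hs p0 P k ->
       g (beta x0 X g k e) = e /\ (forall a : A, g a = e -> beta x0 X g k e <= a)).
Proof.
move=> hgA hgD hdean gI gU gsurj hP k; split.
  by move=> E; apply: (part1 hgA hgD hdean gI gU hP).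
by move=> e he; apply: (part2 hgA hgD hdean gI gU gsurj hP).
Qed.
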